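(* Consider a finite set $\mathcal{U}$ of users with traffic demands $T_u>0$ and attenuations $\ell_u>0$, constants $g,N_0,\Gamma>0$, $c\in(0,1)$, and $T_{tot}=\sum_{u}T_u$. For $W>0$ let $\mathit{EE}_{opt}(W)$ be the maximum of $\mathit{EE}=\frac{cT_{tot}}{\sum_u p_u}$ over allocations $w_u>0$ with $\sum_u w_u=W$ and $p_u=\frac{gN_0\Gamma}{\ell_u}(2^{T_u/w_u}-1)w_u$. Then the optimal energy efficiency admits the explicit upper bound, attained as $W\to\infty$ (low SNR regime), $$\mathit{EE}^*=\frac{cT_{tot}}{gN_0\Gamma\ln 2\sum_{u\in\mathcal{U}}\frac{T_u}{\ell_u}},$$ i.e. $\mathit{EE}_{opt}(W)\le\mathit{EE}^*$ for all $W$ and $\mathit{EE}_{opt}(W)\to\mathit{EE}^*$ as $W\to\infty$.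
   Context: Model: downlink OFDMA single cell with Rayleigh fading; $p_u$ is the minimum transmit power ensuring $\mathbb{P}(C_u\ge T_u)=c$, with $C_u=w_u\log_2(1+\mathit{SNR}_u/\Gamma)$, $\mathit{SNR}_u=p_uh_f\ell_u/(w_uN_0)$, $h_f$ exponential with mean $1/\tau$, $g=\tau/\ln(1/c)$. *)

(* Defs.v *)
From HB Require Import structures.
From mathcomp Require Import all_boot all_order all_algebra.
From mathcomp Require Import all_classical all_reals all_analysis.
Set Implicit Arguments. Unset Strict Implicit. Unset Printing Implicit Defensive.
Import Order.TTheory GRing.Theory Num.Theory.
Local Open Scope classical_set_scope.
Local Open Scope ring_scope.

Definition user_power (R : realType) (g N0 Gam l T w : R) : R :=
  g * N0 * Gam / l * (2 `^ (T / w) - 1) * w.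

Definition Ttot (R : realType) (U : finType) (T : U -> R) : R := \sum_(u : U) T u.

Definition EE (R : realType) (U : finType) (g N0 Gam c : R) (l T w : U -> R) : R :=
  c * Ttot T / \sum_(u : U) user_power g N0 Gam (l u) (T u) (w u).

Definition EE_values (R : realType) (U : finType) (g N0 Gam c : R)
  (l T : U -> R) (W : R) : set R :=
  [set e | exists w : U -> R,
     (forall u, 0 < w u) /\ \sum_(u : U) w u = W /\ e = EE g N0 Gam c l T w].

Definition EE_opt (R : realType) (U : finType) (g N0 Gam c : R)
  (l T : U -> R) (W : R) : R := sup (EE_values g N0 Gam c l T W).

Definition EE_star (R : realType) (U : finType) (g N0 Gam c : R) (l T : U -> R) : R :=
  c * Ttot T / (g * N0 * Gam * ln 2 * \sum_(u : U) T u / l u).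

(* Main.v *)
Set Warnings "-all".
Require Import Defs.
From HB Require Import structures.
From mathcomp Require Import all_boot all_order all_algebra.
From mathcomp Require Import all_classical all_reals all_analysis.
From mathcomp Require Import ring lra.
Import Order.TTheory GRing.Theory Num.Theory.
Local Open Scope classical_set_scope.
Local Open Scope ring_scope.

Set Warnings "-all".
Section H.
Variable R : realType.

Lemma ln2_gt0 : 0 < ln (2:R).
Proof. by apply: ln_gt0; rewrite ltr1n. Qed.

Lemma pow2E (x : R) : 2 `^ x = expR (x * ln 2).
Proof. by rewrite /powR pnatr_eq0. Qed.

Lemma expR_sub1_le (y : R) : expR y - 1 <= y * expR y.
Proof.
have h := expR_ge1Dx (- y). rewrite expRN in h.
have hp := expR_gt0 y.
have : (1 - y) * expR y <= 1.
  by rewrite -[leRHS](mulVf (lt0r_neq0 hp)) ler_pM2r.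
lra.
Qed.

Lemma pow2_lb (x : R) : x * ln 2 <= 2 `^ x - 1.
Proof. rewrite pow2E; have := expR_ge1Dx (x * ln 2); lra. Qed.

Lemma pow2_ub (x : R) : 2 `^ x - 1 <= x * ln 2 * expR (x * ln 2).
Proof. by rewrite pow2E expR_sub1_le. Qed.

Lemma div_anti (x a b : R) : 0 <= x -> 0 < a -> a <= b -> x / b <= x / a.
Proof.
move=> hx ha hab; apply: ler_wpM2l => //.
by rewrite lef_pV2 // ?posrE // (lt_le_trans ha).
Qed.

Lemma power_lb (g N0 Gam l T w : R) : 0 < g -> 0 < N0 -> 0 < Gam -> 0 < l -> 0 < w ->
  g * N0 * Gam * ln 2 * (T / l) <= user_power g N0 Gam l T w.
Proof.
move=> hg hN hG hl hw; rewrite /user_power.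
have hK : 0 <= g * N0 * Gam / l by rewrite ltW // divr_gt0 // !mulr_gt0.
have := pow2_lb (T / w).
move=> /(ler_wpM2l hK) /(ler_wpM2r (ltW hw)).
apply: le_trans; rewrite le_eqVlt; apply/orP; left; apply/eqP.
field; by rewrite ?lt0r_neq0.
Qed.

Lemma power_ub (g N0 Gam l T w Y : R) : 0 < g -> 0 < N0 -> 0 < Gam -> 0 < l -> 0 < w ->
  0 < T -> T / w * ln 2 <= Y ->
  user_power g N0 Gam l T w <= g * N0 * Gam * ln 2 * (T / l) * expR Y.
Proof.
move=> hg hN hG hl hw hT hY; rewrite /user_power.
have hK : 0 <= g * N0 * Gam / l by rewrite ltW // divr_gt0 // !mulr_gt0.
have h1 := pow2_ub (T / w).
have h2 : T / w * ln 2 * expR (T / w * ln 2) <= T / w * ln 2 * expR Y.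
  apply: ler_wpM2l; last by rewrite ler_expR.
  by rewrite mulr_ge0 ?divr_ge0 ?ltW // ln2_gt0.
have := le_trans h1 h2.
move=> /(ler_wpM2l hK) /(ler_wpM2r (ltW hw)).
move=> /le_trans; apply; rewrite le_eqVlt; apply/orP; left; apply/eqP.
field; by rewrite ?lt0r_neq0.
Qed.
End H.

Theorem lemma2 (R : realType) (U : finType) (u0 : U)
  (T l : U -> R) (g N0 Gam c : R)
  (hT : forall u, 0 < T u) (hl : forall u, 0 < l u)
  (hg : 0 < g) (hN0 : 0 < N0) (hGam : 0 < Gam)
  (hc0 : 0 < c) (hc1 : c < 1) :
  (forall W : R, 0 < W -> EE_opt g N0 Gam c l T W <= EE_star g N0 Gam c l T) /\
  (EE_opt g N0 Gam c l T W @[W --> +oo] --> (EE_star g N0 Gam c l T : R^o)).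
Proof.
set K := g * N0 * Gam.
set D := \sum_(u : U) T u / l u.
set S := Ttot T.
have hK : 0 < K by rewrite !mulr_gt0.
have hL := @ln2_gt0 R.
have hD : 0 < D.
  rewrite /D (bigD1 u0) //=; apply: ltr_pwDl; first by rewrite divr_gt0.
  by apply: sumr_ge0 => u _; rewrite ltW // divr_gt0.
have hTS : forall u, T u <= S.
  move=> u; rewrite /S /Ttot (bigD1 u) //= lerDl.
  by apply: sumr_ge0 => v _; rewrite ltW.
have hS : 0 < S by apply: lt_le_trans (hT u0) (hTS u0).
have hcard : (0 < #|U|)%N by apply/card_gt0P; exists u0.
set n : R := #|U|%:R.
have hn : 0 < n by rewrite ltr0n.
have hstar : EE_star g N0 Gam c l T = c * S / (K * ln 2 * D) by [].
have hKD : 0 < K * ln 2 * D by rewrite !mulr_gt0.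
have ub : forall w : U -> R, (forall u, 0 < w u) ->
    EE g N0 Gam c l T w <= EE_star g N0 Gam c l T.
  move=> w hw; rewrite hstar /EE -/S.
  apply: div_anti; first by rewrite mulr_ge0 ?ltW.
    by [].
  rewrite /D mulr_sumr; apply: ler_sum => u _; exact: power_lb.
pose wa (W : R) := fun _ : U => W / n.
have wa_sum : forall W, \sum_(u : U) wa W u = W.
  move=> W; rewrite sumr_const -mulr_natr /wa cardT -cardE -/n mulrVK //. by rewrite unitfE lt0r_neq0.
have wa_mem : forall W, 0 < W -> EE_values g N0 Gam c l T W (EE g N0 Gam c l T (wa W)).
  move=> W hW; exists (wa W); split; last by split.
  by move=> u; rewrite /wa divr_gt0.
have hub : forall W, ubound (EE_values g N0 Gam c l T W) (EE_star g N0 Gam c l T).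
  by move=> W x [w [hw [_ ->]]]; exact: ub.
have part1 : forall W : R, 0 < W -> EE_opt g N0 Gam c l T W <= EE_star g N0 Gam c l T.
  move=> W hW; apply: ge_sup; last exact: hub.
  by exists (EE g N0 Gam c l T (wa W)); exact: wa_mem.
split => //.
have lb : forall W, 0 < W ->
    EE_star g N0 Gam c l T - EE_opt g N0 Gam c l T W
      <= EE_star g N0 Gam c l T * (S * n / W * ln 2).
  move=> W hW.
  set Y := S * n / W * ln 2.
  have hY : 0 <= Y by rewrite mulr_ge0 ?ltW ?divr_gt0 ?mulr_gt0.
  have hP : \sum_(u : U) user_power g N0 Gam (l u) (T u) (wa W u) <= K * ln 2 * D * expR Y.
    rewrite /D mulr_sumr mulr_suml; apply: ler_sum => u _.
    apply: power_ub => //; first by rewrite /wa divr_gt0.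
    rewrite /wa /Y; apply: ler_wpM2r; first exact: ltW.
    rewrite invf_div mulrA; apply: ler_wpM2r; first by rewrite invr_ge0 ltW.
    by apply: ler_wpM2r; [exact: ltW | exact: hTS].
  have hP0 : 0 < \sum_(u : U) user_power g N0 Gam (l u) (T u) (wa W u).
    apply: lt_le_trans hKD _; rewrite /D mulr_sumr; apply: ler_sum => u _.
    by apply: power_lb => //; rewrite /wa divr_gt0.
  have h1 : EE_star g N0 Gam c l T * expR (- Y) <= EE g N0 Gam c l T (wa W).
    rewrite /EE -/S hstar expRN.
    have -> : c * S / (K * ln 2 * D) * (expR Y)^-1 = c * S / (K * ln 2 * D * expR Y).
      by rewrite -mulrA -invfM.
    apply: div_anti hP0 hP; by rewrite mulr_ge0 ?ltW.
  have h2 : EE g N0 Gam c l T (wa W) <= EE_opt g N0 Gam c l T W.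
    apply: ub_le_sup; last exact: wa_mem.
    by exists (EE_star g N0 Gam c l T); exact: hub.
  have h3 : EE_star g N0 Gam c l T * (1 - Y) <= EE_star g N0 Gam c l T * expR (- Y).
    apply: ler_wpM2l; first by rewrite hstar ltW // divr_gt0 ?mulr_gt0.
    by have := expR_ge1Dx (- Y); rewrite addrC.
  have := le_trans h3 (le_trans h1 h2); lra.
set E := EE_star g N0 Gam c l T.
set C := E * (S * n * ln 2).
apply/cvgrPdist_le => eps heps.
have hE : 0 < E by rewrite /E hstar divr_gt0 ?mulr_gt0.
have hC : 0 <= C.
  by apply: ltW; rewrite /C mulr_gt0 // !mulr_gt0.
near=> W.
have hW : 0 < W by near: W; apply: nbhs_pinfty_gt; rewrite num_real.
have hW2 : C / eps < W by near: W; apply: nbhs_pinfty_gt; rewrite num_real.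
have h1 := part1 W hW.
have h2 := lb W hW.
rewrite ger0_norm; last by rewrite subr_ge0.
apply: (le_trans h2).
have -> : E * (S * n / W * ln 2) = C / W by rewrite /C; field; rewrite lt0r_neq0.
rewrite ler_pdivrMr //; rewrite ltr_pdivrMr // in hW2; rewrite mulrC; exact: ltW.
Unshelve. all: by end_near.
Qed.
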